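(* The map $\rho:HC_F(\mathbf v,d)\to Z(\mathbf v,d)$, $\rho([u,y_1,y_2,r_1,r_2])=[u,y_1,y_2]$, is surjective. Moreover, if $\mathbf v_1=(v_{11},v_{12})$, $\mathbf v_2=(v_{21},v_{22})$ are real vectors and $d\in\mathbb{R}$, then $\rho$ restricts to a surjective map $HC_F(\mathbf v,d)(\mathbb{R})\to Z(\mathbf v,d)(\mathbb{R})$.
   Context: Parameters $[\mathbf v,d]=[v_{11},v_{12},v_{21},v_{22},d]\in\mathbb{C}P^4$ (not all zero). On $\mathbb{C}P^4$ with coordinates $[u,y_1,y_2,r_1,r_2]$, let $L_1=v_{11}(u-y_1)-v_{12}y_2$, $L_2=-v_{21}(u+y_1)-v_{22}y_2$, $f_1=(u-y_1)^2+y_2^2$, $f_2=(u+y_1)^2+y_2^2$, and let $HC_F(\mathbf v,d)$ be the set of points with $f_1=r_1^2$, $f_2=r_2^2$ and $L_2r_1-L_1r_2-dr_1r_2=0$. Let $Z(\mathbf v,d)\subset\mathbb{C}P^2$ (coordinates $[u,y_1,y_2]$) be the zero set of $h=(L_2^2f_1+L_1^2f_2-d^2f_1f_2)^2-4L_1^2L_2^2f_1f_2$. For a variety defined by real polynomials, its set of real points $(\mathbb{R})$ consists of its points having a representative with all homogeneous coordinates real. *)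

(* Defs.v *)
From HB Require Import structures.
From mathcomp Require Import all_boot all_order all_algebra.
Set Implicit Arguments. Unset Strict Implicit. Unset Printing Implicit Defensive.
Import Order.TTheory GRing.Theory Num.Theory.
Local Open Scope ring_scope.

(* The ground field: an algebraically closed numeric field C (e.g. the complex
   numbers); its "real" elements are those with  x \is Num.real. *)

Section HC.
Variable C : numClosedFieldType.
Variables v11 v12 v21 v22 d : C.

Definition L1 (u y1 y2 : C) : C := v11 * (u - y1) - v12 * y2.
Definition L2 (u y1 y2 : C) : C := - v21 * (u + y1) - v22 * y2.
Definition f1 (u y1 y2 : C) : C := (u - y1) ^+ 2 + y2 ^+ 2.
Definition f2 (u y1 y2 : C) : C := (u + y1) ^+ 2 + y2 ^+ 2.

(* A representative (u,y1,y2,r1,r2) (nonzero) of a point of HC_F(v,d) in CP^4. *)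
Definition HC_F (u y1 y2 r1 r2 : C) : Prop :=
  [/\ ~ [/\ u = 0, y1 = 0, y2 = 0, r1 = 0 & r2 = 0],
      f1 u y1 y2 = r1 ^+ 2,
      f2 u y1 y2 = r2 ^+ 2 &
      L2 u y1 y2 * r1 - L1 u y1 y2 * r2 - d * r1 * r2 = 0].

Definition hZ (u y1 y2 : C) : C :=
  (L2 u y1 y2 ^+ 2 * f1 u y1 y2 + L1 u y1 y2 ^+ 2 * f2 u y1 y2
     - d ^+ 2 * f1 u y1 y2 * f2 u y1 y2) ^+ 2
  - 4 * L1 u y1 y2 ^+ 2 * L2 u y1 y2 ^+ 2 * f1 u y1 y2 * f2 u y1 y2.

(* A representative (u,y1,y2) (nonzero) of a point of Z(v,d) in CP^2. *)
Definition Zset (u y1 y2 : C) : Prop :=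
  ~ [/\ u = 0, y1 = 0 & y2 = 0] /\ hZ u y1 y2 = 0.
End HC.

Definition real_point3 (C : numClosedFieldType) (u y1 y2 : C) : Prop :=
  exists mu : C, mu != 0 /\
    [/\ mu * u \is Num.real, mu * y1 \is Num.real & mu * y2 \is Num.real].

(* Main.v *)
Require Import Defs.
From HB Require Import structures.
From mathcomp Require Import all_boot all_order all_algebra.
From mathcomp Require Import ring.
Import Order.TTheory GRing.Theory Num.Theory.
Local Open Scope ring_scope.

Section Aux.
Variable C : numClosedFieldType.
Variables v11 v12 v21 v22 d : C.

Lemma key (u y1 y2 r1 r2 : C) :
  f1 u y1 y2 = r1 ^+ 2 -> f2 u y1 y2 = r2 ^+ 2 ->
  hZ v11 v12 v21 v22 d u y1 y2 = 0 ->
  exists s1 s2 : C, s1 ^+ 2 = 1 /\ s2 ^+ 2 = 1 /\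
   L2 v21 v22 u y1 y2 * (s1 * r1) - L1 v11 v12 u y1 y2 * (s2 * r2)
     - d * (s1 * r1) * (s2 * r2) = 0.
Proof.
move=> H1 H2; rewrite /hZ H1 H2.
set A := L2 v21 v22 u y1 y2; set B := L1 v11 v12 u y1 y2.
have -> : (A ^+ 2 * r1 ^+ 2 + B ^+ 2 * r2 ^+ 2 - d ^+ 2 * r1 ^+ 2 * r2 ^+ 2) ^+ 2 -
    4 * B ^+ 2 * A ^+ 2 * r1 ^+ 2 * r2 ^+ 2 =
  ((A * r1 - B * r2 - d * r1 * r2) * (A * r1 - B * r2 + d * r1 * r2))
  * ((A * r1 + B * r2 - d * r1 * r2) * (A * r1 + B * r2 + d * r1 * r2)) by ring.
move/eqP; rewrite !mulf_eq0 => /orP[/orP[]|/orP[]] /eqP E.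
- by exists 1, 1; split; [ring|split; [ring|rewrite -E; ring]].
- exists (-1), (-1); split; [ring|split; [ring|]].
  by apply/eqP; rewrite -oppr_eq0; apply/eqP; rewrite -E; ring.
- exists (-1), 1; split; [ring|split; [ring|]].
  by apply/eqP; rewrite -oppr_eq0; apply/eqP; rewrite -E; ring.
- by exists 1, (-1); split; [ring|split; [ring|rewrite -E; ring]].
Qed.

Lemma hZ_scale (l u y1 y2 : C) :
  hZ v11 v12 v21 v22 d (l * u) (l * y1) (l * y2) =
  l ^+ 8 * hZ v11 v12 v21 v22 d u y1 y2.
Proof. rewrite /hZ /L1 /L2 /f1 /f2; ring. Qed.

Lemma nz3 (u y1 y2 r1 r2 : C) :
  ~ [/\ u = 0, y1 = 0 & y2 = 0] ->
  ~ [/\ u = 0, y1 = 0, y2 = 0, r1 = 0 & r2 = 0].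
Proof. by move=> H [? ? ? _ _]; apply: H. Qed.

Lemma surj_gen (u y1 y2 r1 r2 : C) :
  ~ [/\ u = 0, y1 = 0 & y2 = 0] ->
  f1 u y1 y2 = r1 ^+ 2 -> f2 u y1 y2 = r2 ^+ 2 ->
  hZ v11 v12 v21 v22 d u y1 y2 = 0 ->
  exists s1 s2 : C, s1 ^+ 2 = 1 /\ s2 ^+ 2 = 1 /\
   HC_F v11 v12 v21 v22 d u y1 y2 (s1 * r1) (s2 * r2).
Proof.
move=> Hn H1 H2 Hz; have [s1 [s2 [E1 [E2 E]]]] := key _ _ _ _ _ H1 H2 Hz.
exists s1, s2; split=> //; split=> //; split=> //.
- by apply: nz3.
- by rewrite exprMn E1 mul1r.
- by rewrite exprMn E2 mul1r.
Qed.

End Aux.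
Arguments surj_gen {C v11 v12 v21 v22 d u y1 y2 r1 r2}.

Lemma sq1_real (C : numClosedFieldType) (s : C) : s ^+ 2 = 1 -> s \is Num.real.
Proof. by move=> E; rewrite realEsqr E ler01. Qed.

Theorem lemma8p1 (C : numClosedFieldType) (v11 v12 v21 v22 d : C) :
  ~ [/\ v11 = 0, v12 = 0, v21 = 0, v22 = 0 & d = 0] ->
  (* rho is well defined as a map HC_F(v,d) -> Z(v,d) *)
  (forall u y1 y2 r1 r2 : C,
      HC_F v11 v12 v21 v22 d u y1 y2 r1 r2 -> Zset v11 v12 v21 v22 d u y1 y2)
  (* rho is surjective: every point [u,y1,y2] of Z is the image of a point
     [l u, l y1, l y2, r1, r2] of HC_F *)
  /\ (forall u y1 y2 : C, Zset v11 v12 v21 v22 d u y1 y2 ->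
      exists l r1 r2 : C, l != 0 /\
        HC_F v11 v12 v21 v22 d (l * u) (l * y1) (l * y2) r1 r2)
  (* real case: real points of Z are images of real points of HC_F *)
  /\ ([/\ v11 \is Num.real, v12 \is Num.real, v21 \is Num.real,
          v22 \is Num.real & d \is Num.real] ->
      forall u y1 y2 : C, Zset v11 v12 v21 v22 d u y1 y2 ->
      real_point3 u y1 y2 ->
      exists l r1 r2 : C, l != 0 /\
        HC_F v11 v12 v21 v22 d (l * u) (l * y1) (l * y2) r1 r2 /\
        [/\ l * u \is Num.real, l * y1 \is Num.real, l * y2 \is Num.real,
            r1 \is Num.real & r2 \is Num.real]).
Proof.
move=> _; split; last split.
- move=> u y1 y2 r1 r2 [Hn H1 H2 E]; split.
    move=> [u0 y10 y20]; apply: Hn; split=> //.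
      have : r1 ^+ 2 == 0 by rewrite -H1 u0 y10 y20 /f1; apply/eqP; ring.
      by rewrite expf_eq0 => /andP[_ /eqP].
    have : r2 ^+ 2 == 0 by rewrite -H2 u0 y10 y20 /f2; apply/eqP; ring.
    by rewrite expf_eq0 => /andP[_ /eqP].
  rewrite /hZ H1 H2.
  have -> : d = d * 1 by rewrite mulr1.
  move: E; set A := L2 v21 v22 u y1 y2; set B := L1 v11 v12 u y1 y2 => E.
  have -> : (A ^+ 2 * r1 ^+ 2 + B ^+ 2 * r2 ^+ 2 - (d * 1) ^+ 2 * r1 ^+ 2 * r2 ^+ 2) ^+ 2 -
    4 * B ^+ 2 * A ^+ 2 * r1 ^+ 2 * r2 ^+ 2 =
    (A * r1 - B * r2 - d * r1 * r2) * ((A * r1 - B * r2 + d * r1 * r2) *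
     ((A * r1 + B * r2 - d * r1 * r2) * (A * r1 + B * r2 + d * r1 * r2))) by ring.
  by rewrite E mul0r.
- move=> u y1 y2 [Hn Hz].
  have [s1 [s2 [_ [_ H]]]] := surj_gen Hn (esym (sqrtCK (f1 u y1 y2))) (esym (sqrtCK (f2 u y1 y2))) Hz.
  exists 1, (s1 * sqrtC (f1 u y1 y2)), (s2 * sqrtC (f2 u y1 y2)); split; first exact: oner_neq0.
  by rewrite !mul1r.
- move=> _ u y1 y2 [Hn Hz] [mu [mu0 [Ru Ry1 Ry2]]].
  have Hn' : ~ [/\ mu * u = 0, mu * y1 = 0 & mu * y2 = 0].
    move=> [a b c]; apply: Hn; split.
    + by move/eqP: a; rewrite mulf_eq0 (negbTE mu0) => /eqP.
    + by move/eqP: b; rewrite mulf_eq0 (negbTE mu0) => /eqP.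
    + by move/eqP: c; rewrite mulf_eq0 (negbTE mu0) => /eqP.
  have Hz' : hZ v11 v12 v21 v22 d (mu * u) (mu * y1) (mu * y2) = 0.
    by rewrite hZ_scale Hz mulr0.
  set a := mu * u; set b := mu * y1; set c := mu * y2.
  have F1 : 0 <= f1 a b c.
    by rewrite /f1 addr_ge0 // -realEsqr ?rpredB ?rpredD.
  have F2 : 0 <= f2 a b c.
    by rewrite /f2 addr_ge0 // -realEsqr ?rpredB ?rpredD.
  have [s1 [s2 [E1 [E2 H]]]] := surj_gen Hn' (esym (sqrtCK (f1 a b c))) (esym (sqrtCK (f2 a b c))) Hz'.
  exists mu, (s1 * sqrtC (f1 a b c)), (s2 * sqrtC (f2 a b c)); split=> //; split=> //.
  split=> //; apply: realM.
  - exact: sq1_real.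
  - by apply: ger0_real; rewrite sqrtC_ge0.
  - exact: sq1_real.
  - by apply: ger0_real; rewrite sqrtC_ge0.
Qed.
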